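(* Let $\mathcal A=\bigoplus_{k=1}^\ell M_{n_k}(\mathbb C)$, let $i\neq j$, and let $x_ix_i^\ast\in M_{n_i}(\mathbb C)$ and $x_jx_j^\ast\in M_{n_j}(\mathbb C)$ be rank-one matrices of norm one. For a unimodular $\mu\in\mathbb C$, let $R_\mu\in\mathcal A$ be the element whose $i$-th block is $x_ix_i^\ast$, whose $j$-th block is $\mu x_jx_j^\ast$, and whose other blocks are zero. Then there is a unique unimodular $\mu$ such that $R_\mu\perp I$, namely $\mu=-1$.
   Context: $\mathcal A$ is the $C^\ast$-algebra of block-diagonal matrices with the operator norm, $I$ its identity. $X\perp Y$ (Birkhoff–James orthogonality) means $\|X+\lambda Y\|\ge\|X\|$ for all $\lambda\in\mathbb C$. *)

(* Defs.v *)
From mathcomp Require Import all_boot all_algebra.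
From mathcomp Require Import classical_sets reals complex.
Set Implicit Arguments. Unset Strict Implicit. Unset Printing Implicit Defensive.
Import GRing.Theory Num.Theory.
Local Open Scope ring_scope.

Section BlockAlg.
Variable R : realType.
Local Notation C := R[i].

Definition vnorm2 m (v : 'cV[C]_m) : R :=
  \sum_(a < m) ((complex.Re (v a 0)) ^+ 2 + (complex.Im (v a 0)) ^+ 2).
Definition vnorm m (v : 'cV[C]_m) : R := Num.sqrt (vnorm2 v).

Definition adjmx m p (A : 'M[C]_(m, p)) : 'M[C]_(p, m) := (map_mx (fun z => z^*) A)^T.

Definition mxopnorm m (A : 'M[C]_m) : R :=
  sup [set r | exists v : 'cV[C]_m, vnorm v <= 1 /\ r = vnorm (A *m v)].

Definition balg (l : nat) (n : 'I_l -> nat) := forall k : 'I_l, 'M[C]_(n k).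
Definition bvec (l : nat) (n : 'I_l -> nat) := forall k : 'I_l, 'cV[C]_(n k).

Definition badd l n (X Y : @balg l n) : balg n := fun k => X k + Y k.
Definition bscale l n (c : C) (X : @balg l n) : balg n := fun k => c *: X k.
Definition bone l n : @balg l n := fun k => 1%:M.
Definition bapply l n (X : @balg l n) (v : bvec n) : bvec n := fun k => X k *m v k.

(* Euclidean norm on C^(n_1 + ... + n_l) = (+)_k C^(n k) *)
Definition bvnorm l n (v : @bvec l n) : R := Num.sqrt (\sum_k vnorm2 (v k)).

Definition bnorm l n (X : @balg l n) : R :=
  sup [set r | exists v : bvec n, bvnorm v <= 1 /\ r = bvnorm (bapply X v)].

Definition BJorth l n (X Y : @balg l n) : Prop :=
  forall lam : C, bnorm X <= bnorm (badd X (bscale lam Y)).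

End BlockAlg.

(* Main.v *)
Require Import Defs.
From mathcomp Require Import all_boot all_order all_algebra.
From mathcomp Require Import classical_sets reals complex.
From mathcomp Require Import ring lra.
Import Order.TTheory GRing.Theory Num.Theory.
Local Open Scope ring_scope.
Set Implicit Arguments. Unset Strict Implicit.

Section H.
Variable R : realType.
Local Notation C := R[i].

Definition nz (z : C) : R := complex.Re z ^+ 2 + complex.Im z ^+ 2.
Arguments nz : simpl never.
Definition dot m (u v : 'cV[C]_m) : C := \sum_a (u a 0)^* * v a 0.

Lemma nzC z : (nz z)%:C%C = z * z^*.
Proof. by rewrite /nz add_Re2_Im2 normCK. Qed.

Lemma nz_ge0 z : 0 <= nz z.
Proof. by rewrite /nz addr_ge0 // sqr_ge0. Qed.

Lemma vnorm2_ge0 m (v : 'cV[C]_m) : 0 <= vnorm2 v.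
Proof. by apply: sumr_ge0 => a _; apply: nz_ge0. Qed.

Lemma vnorm2C m (v : 'cV[C]_m) : (vnorm2 v)%:C%C = \sum_a v a 0 * (v a 0)^*.
Proof. rewrite /vnorm2 rmorph_sum; apply: eq_bigr => a _; exact: nzC. Qed.

Lemma dotvv m (v : 'cV[C]_m) : dot v v = (vnorm2 v)%:C%C.
Proof. rewrite vnorm2C; apply: eq_bigr => a _; exact: mulrC. Qed.

Lemma adj_mul m (u v : 'cV[C]_m) : adjmx u *m v = (dot u v)%:M.
Proof.
apply/matrixP => a b; rewrite !ord1 !mxE /dot; apply: eq_bigr => c _.
by rewrite !mxE.
Qed.

Lemma Pmul m (x v : 'cV[C]_m) : (x *m adjmx x) *m v = dot x v *: x.
Proof. by rewrite -mulmxA adj_mul mul_mx_scalar. Qed.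

Lemma blk_apply m (x v : 'cV[C]_m) c l :
  (c *: (x *m adjmx x) + l *: 1%:M) *m v = (c * dot x v) *: x + l *: v.
Proof. by rewrite mulmxDl -!scalemxAl Pmul mul1mx scalerA. Qed.

Lemma expand m (x v : 'cV[C]_m) a b :
  (vnorm2 (a *: x + b *: v))%:C%C =
  a * a^* * (vnorm2 x)%:C%C + a * b^* * (dot x v)^* + b * a^* * dot x v
  + b * b^* * (vnorm2 v)%:C%C.
Proof.
rewrite !vnorm2C /dot rmorph_sum !mulr_sumr -!big_split /=.
apply: eq_bigr => c _; rewrite !mxE !rmorphD !rmorphM /= !conjCK; ring.
Qed.

Lemma vnorm2Z m (x : 'cV[C]_m) a : vnorm2 (a *: x) = nz a * vnorm2 x.
Proof.
apply: (@complexI R); have := expand x x a 0.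
rewrite !scale0r !addr0 => ->; rewrite rmorphM /= nzC; ring.
Qed.

Lemma key m (x v : 'cV[C]_m) c l : vnorm2 x = 1 ->
  vnorm2 ((c * dot x v) *: x + l *: v) =
  nz l * vnorm2 v + (nz (c + l) - nz l) * nz (dot x v).
Proof.
move=> hx; apply: (@complexI R); rewrite expand hx.
rewrite rmorphD !rmorphM rmorphB /= !nzC rmorphD /=; ring.
Qed.

Lemma conjR (s : R) : (s%:C%C)^* = s%:C%C.
Proof. exact: conjc_real. Qed.

Lemma vnorm2_0 m : vnorm2 (0 : 'cV[C]_m) = 0.
Proof. by apply: big1 => a _; rewrite mxE /nz /=; rewrite expr0n /= addr0. Qed.

Lemma vnorm2_eq0 m (x : 'cV[C]_m) : vnorm2 x = 0 -> x = 0.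
Proof.
move=> h; apply/matrixP => a b; rewrite !ord1 mxE.
have := @psumr_eq0P _ _ xpredT (fun a => nz (x a 0)) (fun a _ => nz_ge0 _) h a isT.
move=> /(congr1 (fun r : R => r%:C%C)); rewrite nzC /= => /eqP.
by rewrite mulf_eq0 conjC_eq0 orbb => /eqP.
Qed.

Lemma CS m (x v : 'cV[C]_m) : nz (dot x v) <= vnorm2 x * vnorm2 v.
Proof.
have [s0|spos] := eqVneq (vnorm2 x) 0.
  rewrite (vnorm2_eq0 s0) vnorm2_0 mul0r /dot big1 ?/nz /= ?expr0n /= ?addr0 // => a _.
  by rewrite mxE conjC0 mul0r.
have sgt : 0 < vnorm2 x by rewrite lt0r spos vnorm2_ge0.
have h := vnorm2_ge0 ((- dot x v) *: x + ((vnorm2 x)%:C%C) *: v).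
have e : vnorm2 ((- dot x v) *: x + ((vnorm2 x)%:C%C) *: v) =
   vnorm2 x * (vnorm2 x * vnorm2 v - nz (dot x v)).
  apply: (@complexI R); rewrite expand conjR.
  rewrite !rmorphM rmorphB rmorphM /= nzC rmorphN /=; ring.
rewrite e pmulr_rge0 // subr_ge0 in h; by [].
Qed.
Lemma sup_sqrt_le (T : Type) (P : T -> Prop) (f : T -> R) (M : R) (v0 : T) :
  P v0 -> (forall v, P v -> f v <= M) ->
  sup [set r | exists v, P v /\ r = Num.sqrt (f v)] <= Num.sqrt M.
Proof.
move=> p0 hf; apply: ge_sup; first by exists (Num.sqrt (f v0)), v0.
by move=> r [v [pv ->]]; apply: ler_wsqrtr; apply: hf.
Qed.

Lemma sup_sqrt_ge (T : Type) (P : T -> Prop) (f : T -> R) (M : R) (v0 : T) :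
  P v0 -> (forall v, P v -> f v <= M) ->
  Num.sqrt (f v0) <= sup [set r | exists v, P v /\ r = Num.sqrt (f v)].
Proof.
move=> p0 hf; apply: sup_upper_bound; last by exists v0.
split; first by exists (Num.sqrt (f v0)), v0.
exists (Num.sqrt M) => r [v [pv ->]]; apply: ler_wsqrtr; exact: hf.
Qed.

Lemma sqrt_le1 (a : R) : Num.sqrt a <= 1 -> a <= 1.
Proof. by move=> h; rewrite -ler_sqrt ?ler01 // sqrtr1. Qed.

Lemma nzR (r : R) : nz (r%:C%C) = r ^+ 2.
Proof. by rewrite /nz /= expr0n /= addr0. Qed.

Lemma dotZ m (x v : 'cV[C]_m) a : dot x (a *: v) = a * dot x v.
Proof.
rewrite /dot mulr_sumr; apply: eq_bigr => c _; rewrite mxE; ring.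
Qed.

Lemma opn_le m (x : 'cV[C]_m) : mxopnorm (x *m adjmx x) <= vnorm2 x.
Proof.
have hs := vnorm2_ge0 x.
rewrite -[X in _ <= X](ger0_norm hs) -sqrtr_sqr /mxopnorm /vnorm.
apply: (@sup_sqrt_le _ (fun v => Num.sqrt (vnorm2 v) <= 1) (fun v => vnorm2 ((x *m adjmx x) *m v)) _ 0).
  by rewrite vnorm2_0 sqrtr0.
move=> v /sqrt_le1 hv; rewrite Pmul vnorm2Z.
have := CS x v; have := nz_ge0 (dot x v); have := vnorm2_ge0 v.
move: (vnorm2 x) (vnorm2 v) (nz (dot x v)) hs hv => s N A hs hv hN hA hC.
have h1 : 0 <= s * (s * N - A) by rewrite mulr_ge0 // subr_ge0.
have h2 : 0 <= s * s * (1 - N) by rewrite !mulr_ge0 // subr_ge0.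
nra.
Qed.

Lemma opn_ge m (x : 'cV[C]_m) : 0 < vnorm2 x -> vnorm2 x <= mxopnorm (x *m adjmx x).
Proof.
move=> hs; set s := vnorm2 x.
have hs0 : 0 <= s by exact: ltW.
pose v0 := ((Num.sqrt s)^-1)%:C%C *: x.
have hq : 0 < Num.sqrt s by rewrite sqrtr_gt0.
have hN : vnorm2 v0 = 1.
  rewrite vnorm2Z nzR exprVn sqr_sqrtr // mulVf //; exact: lt0r_neq0.
have hf : vnorm2 ((x *m adjmx x) *m v0) = s ^+ 2.
  rewrite Pmul vnorm2Z /v0 dotZ dotvv -rmorphM nzR exprMn exprVn sqr_sqrtr //.
  rewrite -/s; field; exact: lt0r_neq0.
rewrite -[X in X <= _](ger0_norm hs0) -sqrtr_sqr -hf /mxopnorm /vnorm.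
apply: (@sup_sqrt_ge _ (fun v => Num.sqrt (vnorm2 v) <= 1) (fun v => vnorm2 ((x *m adjmx x) *m v)) (s ^+ 2) v0).
  by rewrite hN sqrtr1.
move=> v /sqrt_le1 hv; rewrite Pmul vnorm2Z.
have := CS x v; have := nz_ge0 (dot x v); have := vnorm2_ge0 v.
move: (vnorm2 v) (nz (dot x v)) hv => N A hv hN0 hA hC.
have h1 : 0 <= s * (s * N - A) by rewrite mulr_ge0 // subr_ge0.
have h2 : 0 <= s * s * (1 - N) by rewrite !mulr_ge0 // subr_ge0.
rewrite -/s in hC *; nra.
Qed.

Lemma norm_one m (x : 'cV[C]_m) : mxopnorm (x *m adjmx x) = 1 -> vnorm2 x = 1.
Proof.
move=> h; have h1 := opn_le x; rewrite h in h1.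
have h2 := opn_ge (lt_le_trans ltr01 h1); rewrite h in h2.
by apply/eqP; rewrite eq_le h2 h1.
Qed.
Lemma nzD p q a b : nz (Complex p q + Complex a b) = (p + a) ^+ 2 + (q + b) ^+ 2.
Proof. by []. Qed.
Lemma nzE a b : nz (Complex a b) = a ^+ 2 + b ^+ 2.
Proof. by []. Qed.
Lemma N1E : (-1 : C) = Complex (-1) 0.
Proof. by apply/eqP; rewrite eq_complex /= oppr0 !eqxx. Qed.

Lemma bnorm_le l (n : 'I_l -> nat) (X : balg R n) M : 0 <= M ->
  (forall k (w : 'cV_(n k)), vnorm2 (X k *m w) <= M * vnorm2 w) ->
  bnorm X <= Num.sqrt M.
Proof.
move=> hM hX; rewrite /bnorm /bvnorm.
apply: (@sup_sqrt_le _ (fun v : bvec R n => Num.sqrt (\sum_k vnorm2 (v k)) <= 1)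
   (fun v => \sum_k vnorm2 (bapply X v k)) M (fun k => 0)).
  by rewrite big1 ?sqrtr0 // => k _; rewrite vnorm2_0.
move=> v /sqrt_le1 hv.
apply: (le_trans (y := \sum_k M * vnorm2 (v k))).
  by apply: ler_sum => k _; apply: hX.
by rewrite -mulr_sumr; rewrite ler_piMr.
Qed.

Lemma bnorm_ge l (n : 'I_l -> nat) (X : balg R n) M (v0 : bvec R n) : 0 <= M ->
  (forall k (w : 'cV_(n k)), vnorm2 (X k *m w) <= M * vnorm2 w) ->
  \sum_k vnorm2 (v0 k) <= 1 ->
  Num.sqrt (\sum_k vnorm2 (X k *m v0 k)) <= bnorm X.
Proof.
move=> hM hX h0; rewrite /bnorm /bvnorm.
apply: (@sup_sqrt_ge _ (fun v : bvec R n => Num.sqrt (\sum_k vnorm2 (v k)) <= 1)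
   (fun v => \sum_k vnorm2 (bapply X v k)) M v0).
  by rewrite -sqrtr1 ler_wsqrtr.
move=> v /sqrt_le1 hv.
apply: (le_trans (y := \sum_k M * vnorm2 (v k))).
  by apply: ler_sum => k _; apply: hX.
by rewrite -mulr_sumr; rewrite ler_piMr.
Qed.

Lemma sum_e l (n : 'I_l -> nat) (x : bvec R n) i :
  \sum_k vnorm2 ((fun k => if k == i then x k else 0) k) = vnorm2 (x i).
Proof.
rewrite (bigD1 i) //= eqxx big1 ?addr0 // => k /negbTE ->; exact: vnorm2_0.
Qed.

Lemma sum_Xe l (n : 'I_l -> nat) (X : balg R n) (x : bvec R n) i :
  \sum_k vnorm2 (X k *m (fun k => if k == i then x k else 0) k) = vnorm2 (X i *m x i).
Proof.
rewrite (bigD1 i) //= eqxx big1 ?addr0 // => k /negbTE ->.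
by rewrite mulmx0 vnorm2_0.
Qed.

Lemma blk_bound m (x w : 'cV[C]_m) c l M : vnorm2 x = 1 -> nz l <= M -> nz (c + l) <= M ->
  vnorm2 ((c *: (x *m adjmx x) + l *: 1%:M) *m w) <= M * vnorm2 w.
Proof.
move=> hx h1 h2; rewrite blk_apply key //.
have := CS x w; rewrite hx mul1r => hC.
have hA := nz_ge0 (dot x w).
have e1 : 0 <= (M - nz l) * (vnorm2 w - nz (dot x w)) by rewrite mulr_ge0 // subr_ge0.
have e2 : 0 <= (M - nz (c + l)) * nz (dot x w) by rewrite mulr_ge0 // subr_ge0.
nra.
Qed.

Lemma blk0_bound m (x w : 'cV[C]_m) l M : nz l <= M ->
  vnorm2 ((0 *: (x *m adjmx x) + l *: 1%:M) *m w) <= M * vnorm2 w.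
Proof.
move=> h; rewrite scale0r add0r -scalemxAl mul1mx vnorm2Z.
by rewrite ler_wpM2r // vnorm2_ge0.
Qed.

Lemma blk_val m (x : 'cV[C]_m) c l : vnorm2 x = 1 ->
  vnorm2 ((c *: (x *m adjmx x) + l *: 1%:M) *m x) = nz (c + l).
Proof.
move=> hx; rewrite blk_apply key // dotvv hx nzR; ring.
Qed.
Lemma t1 (p q : R) : p ^+ 2 + q ^+ 2 = 1 -> -1 <= p.
Proof. move=> h. nra. Qed.
Lemma t1' (p q : R) : p ^+ 2 + q ^+ 2 = 1 -> p <= 1.
Proof. move=> h. nra. Qed.
Lemma t2 (p q : R) : p ^+ 2 + q ^+ 2 = 1 -> p <= 1 -> (-(1+p)/4) ^+ 2 + (-q/4)^+2 <= (10 - 6 * p)/16.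
Proof. move=> h h1. nra. Qed.
Lemma t3 (p q : R) : p ^+ 2 + q ^+ 2 = 1 -> (1 + -(1+p)/4) ^+ 2 + (0 + -q/4)^+2 <= (10 - 6 * p)/16.
Proof. move=> h. nra. Qed.
Lemma t4 (p q : R) : p ^+ 2 + q ^+ 2 = 1 -> (p + -(1+p)/4) ^+ 2 + (q + -q/4)^+2 <= (10 - 6 * p)/16.
Proof. move=> h. nra. Qed.
Lemma t6 (a b : R) : 1 <= (1 + a) ^+ 2 + (0 + b) ^+ 2 \/ 1 <= (-1 + a) ^+ 2 + (0 + b) ^+ 2.
Proof. case: (lerP 1 ((1 + a) ^+ 2 + (0 + b) ^+ 2)) => h; [by left|right]; nra. Qed.
Lemma t7 (p : R) : p <= 1 -> 0 <= (10 - 6 * p)/16.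
Proof. move=> h; lra. Qed.
Lemma t8 (p : R) : -1 < p -> (10 - 6 * p)/16 < 1.
Proof. move=> h; lra. Qed.
Lemma t5 (q : R) : (-1) ^+ 2 + q ^+ 2 = 1 -> q ^+ 2 = 0.
Proof. move=> h. nra. Qed.
End H.

Theorem lemma6p1 (R : realType) (l : nat) (n : 'I_l -> nat)
  (hn : forall k, (0 < n k)%N) (i j : 'I_l) (hij : i != j)
  (x : forall k : 'I_l, 'cV[R[i]]_(n k))
  (hxi : mxopnorm (x i *m adjmx (x i)) = 1) (hri : \rank (x i *m adjmx (x i)) = 1%N)
  (hxj : mxopnorm (x j *m adjmx (x j)) = 1) (hrj : \rank (x j *m adjmx (x j)) = 1%N) :
  let Rmu (mu : R[i]) : balg R n := fun k =>
    (if k == i then 1 else if k == j then mu else 0) *: (x k *m adjmx (x k)) in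
  forall mu : R[i], `|mu| = 1 -> (BJorth (Rmu mu) (bone R n) <-> mu = -1).
Proof.
move=> Rmu mu hmu.
have hx1 := norm_one hxi; have hx2 := norm_one hxj.
have hji : j != i by rewrite eq_sym.
have blk : forall lam M, nz lam <= M -> nz (1 + lam) <= M -> nz (mu + lam) <= M ->
    forall k (w : 'cV_(n k)),
    vnorm2 (badd (Rmu mu) (bscale lam (bone R n)) k *m w) <= M * vnorm2 w.
  move=> lam M h0 h1 h2 k; rewrite /badd /bscale /bone /Rmu.
  case: (k =P i) => [->|/eqP ki]; first by move=> w; apply: blk_bound.
  case: (k =P j) => [->|/eqP kj]; first by move=> w; apply: blk_bound.
  by move=> w; apply: blk0_bound.
have blkR : forall M, 0 <= M -> 1 <= M -> nz mu <= M ->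
    forall k (w : 'cV_(n k)), vnorm2 (Rmu mu k *m w) <= M * vnorm2 w.
  move=> M h0 h1 h2 k w.
  have n0 : nz 0 <= M by rewrite (nzR 0) expr0n.
  have n1 : nz (1 + 0) <= M by rewrite addr0 (nzR 1) expr1n.
  have := blk 0 M n0 n1; rewrite addr0 => /(_ h2 k w).
  by rewrite /badd /bscale /bone scale0r addr0.
have Rge : 1 <= bnorm (Rmu mu).
  have hM : 0 <= 1 + nz mu by rewrite addr_ge0 // nz_ge0.
  have hM1 : 1 <= 1 + nz mu by rewrite lerDl nz_ge0.
  have hM2 : nz mu <= 1 + nz mu by rewrite lerDr.
  have := bnorm_ge (X := Rmu mu) (v0 := fun k => if k == i then x k else 0) hM (blkR _ hM hM1 hM2).
  rewrite sum_e hx1 lexx sum_Xe => /(_ isT).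
  have -> : Rmu mu i = 1 *: (x i *m adjmx (x i)) + 0 *: 1%:M by rewrite /Rmu eqxx scale0r addr0.
  by rewrite blk_val // addr0 (nzR 1) expr1n sqrtr1.
have Xv : forall lam, bnorm (badd (Rmu mu) (bscale lam (bone R n))) >= Num.sqrt (nz (1 + lam))
   /\ bnorm (badd (Rmu mu) (bscale lam (bone R n))) >= Num.sqrt (nz (mu + lam)).
  move=> lam; set M := nz lam + nz (1 + lam) + nz (mu + lam).
  have g0 := nz_ge0 lam; have g1 := nz_ge0 (1 + lam); have g2 := nz_ge0 (mu + lam).
  have hM : 0 <= M by rewrite /M; lra.
  have hX := blk lam M ltac:(rewrite /M; lra) ltac:(rewrite /M; lra) ltac:(rewrite /M; lra).
  split.
    have := bnorm_ge (X := badd (Rmu mu) (bscale lam (bone R n))) (v0 := fun k => if k == i then x k else 0) hM hX.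
    rewrite sum_e hx1 lexx sum_Xe => /(_ isT).
    by rewrite /badd /bscale /bone /Rmu eqxx blk_val.
  have := bnorm_ge (X := badd (Rmu mu) (bscale lam (bone R n))) (v0 := fun k => if k == j then x k else 0) hM hX.
  rewrite sum_e hx2 lexx sum_Xe => /(_ isT).
  by rewrite /badd /bscale /bone /Rmu eqxx (negbTE hji) blk_val.
split.
  move=> hBJ; move: hmu hBJ Xv blk blkR Rge; case: mu => p q hmu hBJ Xv blk blkR Rge.
  have hpq : p ^+ 2 + q ^+ 2 = 1.
    by have := add_Re2_Im2 (Complex p q); rewrite hmu expr1n => /complexI.
  have hp : p = -1.
    apply/eqP; apply/negPn/negP => hp.
    have hp1 : -1 < p by rewrite lt_def hp /=; exact: t1 hpq.
    have hp2 := t1' hpq.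
    pose lam := Complex (-(1+p)/4) (-q/4).
    pose M := (10 - 6 * p)/16.
    have hb : bnorm (badd (Rmu (Complex p q)) (bscale lam (bone R n))) <= Num.sqrt M.
      apply: bnorm_le; first exact: t7.
      apply: blk.
      - by rewrite nzE /M; apply: t2.
      - by change (nz (Complex 1 0 + lam) <= M); rewrite nzD /M; apply: t3.
      - by rewrite nzD /M; apply: t4.
    have sM : Num.sqrt M < 1 by rewrite -sqrtr1 ltr_sqrt //; exact: t8.
    have := le_trans Rge (le_trans (hBJ lam) hb).
    by rewrite leNgt sM.
  have hq : q = 0.
    by apply/eqP; rewrite -sqrf_eq0; apply/eqP; rewrite hp in hpq; apply: t5.
  by rewrite hp hq N1E.
move=> hm lam.
have up : bnorm (Rmu mu) <= 1.
  rewrite -sqrtr1; apply: bnorm_le => //; apply: blkR => //.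
  by rewrite hm N1E nzE expr0n sqrrN expr1n addr0.
case: (Xv lam) => h1 h2.
apply: (le_trans up).
have : 1 <= nz (1 + lam) \/ 1 <= nz (mu + lam).
  rewrite hm N1E; case: lam {h1 h2} => a b.
  change (1 <= nz (Complex 1 0 + Complex a b) \/ 1 <= nz (Complex (-1) 0 + Complex a b)).
  rewrite !nzD; exact: t6.
case=> h.
  by apply: le_trans h1; rewrite -sqrtr1 ler_wsqrtr.
by apply: le_trans h2; rewrite -sqrtr1 ler_wsqrtr.
Qed.
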